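(* Let $T$ be a tree on $n$ nodes, rooted at some node $r$, and let $k\ge1$. Call layer $i$ the set of nodes at distance exactly $i$ from $r$. Let $n_i$ be the number of nodes in layer $i$ (so $n_0=1$), and let $h$ be the depth of $T$, i.e., the largest distance from $r$ to a node. Then $$M^T_{k,n}\le \sum_{i=0}^h M^C_{k,n_i}.$$
   Context: For a graph $G$ on $n$ nodes, a measurement matrix for $G$ is a $0$-$1$ matrix with columns indexed by the nodes in which every nonzero row has a support that induces a connected subgraph of $G$. A vector is $k$-sparse if it has at most $k$ nonzero entries. $A$ identifies all $k$-sparse vectors if $Ax_1\ne Ax_2$ for every two distinct $k$-sparse $x_1,x_2\in\mathbb{R}^n$. $M^G_{k,n}$ is the minimum number of rows of a measurement matrix for $G$ that identifies all $k$-sparse vectors. $M^C_{k,N}$ is the minimum number of rows of an arbitrary $0$-$1$ matrix with $N$ columns that identifies all $k$-sparse vectors in $\mathbb{R}^N$. *)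

(* Defs.v *)
From HB Require Import structures.
From mathcomp Require Import all_boot all_order all_algebra.
From Stdlib Require Import ClassicalEpsilon.
Set Implicit Arguments. Unset Strict Implicit. Unset Printing Implicit Defensive.
Import Order.TTheory GRing.Theory Num.Theory.
Local Open Scope ring_scope.

Definition pbool (P : Prop) : bool :=
  if excluded_middle_informative P then true else false.

Lemma pboolP (P : Prop) : reflect P (pbool P).
Proof. rewrite /pbool; case: excluded_middle_informative => H; by constructor. Qed.

Definition simple_graph (n : nat) (e : rel 'I_n) : Prop :=
  symmetric e /\ irreflexive e.

Definition acyclic (n : nat) (e : rel 'I_n) : Prop :=
  forall c : seq 'I_n, uniq c -> (2 < size c)%N -> ~~ cycle e c.

Definition connected (n : nat) (e : rel 'I_n) : Prop :=
  forall u v : 'I_n, connect e u v.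

Definition is_tree (n : nat) (e : rel 'I_n) : Prop :=
  simple_graph e /\ connected e /\ acyclic e.

Definition walkb (n : nat) (e : rel 'I_n) (r v : 'I_n) (m : nat) : bool :=
  [exists p : m.-tuple 'I_n, path e r p && (last r p == v)].

(* graph distance from r to v: the least m with a walk of length m
   (in a connected graph on n nodes this is < n) *)
Definition dist (n : nat) (e : rel 'I_n) (r v : 'I_n) : nat :=
  find (walkb e r v) (iota 0 n).

Definition layer (n : nat) (e : rel 'I_n) (r : 'I_n) (i : nat) : {set 'I_n} :=
  [set v | dist e r v == i].

Definition depth (n : nat) (e : rel 'I_n) (r : 'I_n) : nat :=
  \max_(v : 'I_n) dist e r v.

Definition zero_one (R : nzRingType) (m n : nat) (A : 'M[R]_(m, n)) : bool :=
  [forall i, forall j, (A i j == 0) || (A i j == 1)].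

Definition row_support (R : nzRingType) (m n : nat) (A : 'M[R]_(m, n)) (i : 'I_m)
  : {set 'I_n} := [set j | A i j != 0].

Definition induced (n : nat) (e : rel 'I_n) (S : {set 'I_n}) : rel 'I_n :=
  [rel a b | [&& e a b, a \in S & b \in S]].

Definition induces_connected (n : nat) (e : rel 'I_n) (S : {set 'I_n}) : Prop :=
  forall u v, u \in S -> v \in S -> connect (induced e S) u v.

Definition meas_matrix (R : nzRingType) (n : nat) (e : rel 'I_n) (m : nat)
  (A : 'M[R]_(m, n)) : Prop :=
  zero_one A /\
  forall i : 'I_m, row_support A i != set0 -> induces_connected e (row_support A i).

Definition sparse (R : nzRingType) (k n : nat) (x : 'cV[R]_n) : bool :=
  (#|[set j | x j ord0 != 0%R]| <= k)%N.

Definition identifies (R : nzRingType) (k m n : nat) (A : 'M[R]_(m, n)) : Prop :=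
  forall x1 x2 : 'cV[R]_n, sparse k x1 -> sparse k x2 -> x1 != x2 ->
    A *m x1 != A *m x2.

Definition has_graph_design (R : nzRingType) (n : nat) (e : rel 'I_n) (k m : nat)
  : Prop := exists A : 'M[R]_(m, n), meas_matrix e A /\ identifies k A.

Definition has_design (R : nzRingType) (k N m : nat) : Prop :=
  exists A : 'M[R]_(m, N), zero_one A /\ identifies k A.

(* the identity matrix witnesses existence *)
Lemma zero_one_id (R : nzRingType) n : zero_one (1%:M : 'M[R]_n).
Proof.
apply/forallP=> i; apply/forallP=> j; rewrite !mxE.
by case: (i == j); rewrite ?eqxx ?orbT.
Qed.

Lemma identifies_id (R : nzRingType) k n : identifies k (1%:M : 'M[R]_n).
Proof. by move=> x1 x2 _ _; rewrite !mul1mx. Qed.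

Lemma has_graph_design_ex (R : nzRingType) (n : nat) (e : rel 'I_n) (k : nat) :
  exists m, pbool (has_graph_design R e k m).
Proof.
exists n; apply/pboolP; exists 1%:M; split; last exact: identifies_id.
split; first exact: zero_one_id.
move=> i _ u v; rewrite !inE !mxE.
case: (eqVneq i u) => [<-|_]; last by rewrite eqxx.
case: (eqVneq i v) => [<-|_]; last by rewrite eqxx.
by move=> _ _; exact: connect0.
Qed.

Lemma has_design_ex (R : nzRingType) (k N : nat) :
  exists m, pbool (has_design R k N m).
Proof.
exists N; apply/pboolP; exists 1%:M; split; [exact: zero_one_id | exact: identifies_id].
Qed.

Definition MG (R : nzRingType) (n : nat) (e : rel 'I_n) (k : nat) : nat :=
  ex_minn (has_graph_design_ex R e k).

Definition MC (R : nzRingType) (k N : nat) : nat :=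
  ex_minn (has_design_ex R k N).

(* Main.v *)
Require Import Defs.
From HB Require Import structures.
From mathcomp Require Import all_boot all_order all_algebra.
Set Implicit Arguments. Unset Strict Implicit. Unset Printing Implicit Defensive.

Lemma walkbP n (e : rel 'I_n) r v m :
  reflect (exists p : seq 'I_n, [/\ size p = m, path e r p & last r p = v])
          (walkb e r v m).
Proof.
apply: (iffP existsP) => [[p /andP[pp /eqP lp]]|[p [sp pp lp]]].
  by exists (val p); rewrite size_tuple.
have sp' : size p == m by rewrite sp.
by exists (Tuple sp'); rewrite /= pp lp eqxx.
Qed.

Lemma dist_spec n (e : rel 'I_n) r v : connect e r v ->
  (dist e r v < n)%N /\ walkb e r v (dist e r v).
Proof.
move/connectP=> [p pp ->].
case: (shortenP pp) => p' pp' up' _.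
have hs : (size p' < n)%N.
  by have := max_card (mem (r :: p')); rewrite card_ord (card_uniqP up').
have hh : has (walkb e r (last r p')) (iota 0 n).
  by apply/hasP; exists (size p'); rewrite ?mem_iota ?add0n ?hs //; apply/walkbP; exists p'.
have hf : (dist e r (last r p') < n)%N by move: (hh); rewrite has_find size_iota.
split=> //.
by have := nth_find 0 hh; rewrite nth_iota.
Qed.

Lemma dist_min n (e : rel 'I_n) r v m : (m < n)%N -> walkb e r v m -> (dist e r v <= m)%N.
Proof.
move=> mn w; rewrite leqNgt; apply/negP => lt.
by have := before_find 0 lt; rewrite nth_iota // w.
Qed.

Lemma dist0 n (e : rel 'I_n) r v : connect e r v -> dist e r v = 0%N -> v = r.
Proof.
move=> c d0; have [_ ] := dist_spec c; rewrite d0 => /walkbP [p [sp _ lp]].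
by move: sp lp; case: p.
Qed.

Lemma dist_rr n (e : rel 'I_n) r : dist e r r = 0%N.
Proof.
apply/eqP; rewrite -leqn0; apply: dist_min; first exact: leq_ltn_trans (leq0n r) (ltn_ord r).
by apply/walkbP; exists [::].
Qed.

Lemma dist_parent n (e : rel 'I_n) r v : connect e r v -> (0 < dist e r v)%N ->
  exists w, e w v /\ (dist e r w < dist e r v)%N.
Proof.
move=> c dpos; have [dn /walkbP [p [sp pp lp]]] := dist_spec c.
case/lastP: p sp pp lp => [|q x]; first by move=> sp; rewrite -sp in dpos.
rewrite size_rcons rcons_path last_rcons => sp /andP[pq ex] xv.
exists (last r q); split; first by rewrite -xv.
apply: (@leq_ltn_trans (size q)); last by rewrite -sp.
apply: dist_min; first by apply: ltn_trans dn; rewrite -sp.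
by apply/walkbP; exists q.
Qed.

Lemma reach n (e : rel 'I_n) r (S : {set 'I_n}) : connected e ->
  forall v, v \in S -> (forall u, (dist e r u < dist e r v)%N -> u \in S) ->
  connect (induced e S) r v.
Proof.
move=> ce v; move: {2}(dist e r v).+1 (ltnSn (dist e r v)) => N.
elim: N v => [//|N IH] v dv vS hS.
case: (posnP (dist e r v)) => [d0|dpos].
  by rewrite (dist0 (ce r v) d0); exact: connect0.
have [w [ewv dw]] := dist_parent (ce r v) dpos.
have wS : w \in S by apply: hS.
apply: connect_trans (IH w _ wS _) _.
- by apply: leq_trans dw _; rewrite -ltnS.
- by move=> u du; apply: hS; apply: ltn_trans du dw.
by apply: connect1; apply/and3P.
Qed.

Lemma ball_conn n (e : rel 'I_n) r j (S : {set 'I_n}) : simple_graph e -> connected e ->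
  (forall v, v \in S -> (dist e r v <= j)%N) ->
  (forall u, (dist e r u < j)%N -> u \in S) -> induces_connected e S.
Proof.
move=> [se _] ce hS1 hS2.
case: (posnP j) => [j0|jpos].
  move=> u v uS vS.
  have u0 := hS1 u uS; have v0 := hS1 v vS; rewrite j0 leqn0 in u0; rewrite j0 leqn0 in v0.
  by rewrite (dist0 (ce r u) (eqP u0)) (dist0 (ce r v) (eqP v0)); exact: connect0.
have rS : r \in S by apply: hS2; rewrite dist_rr.
have hr : forall v, v \in S -> connect (induced e S) r v.
  move=> v vS; apply: reach => // u du; apply: hS2.
  exact: leq_trans du (hS1 v vS).
have sym : connect_sym (induced e S).
  apply: sym_connect_sym => a b; rewrite /induced /= se; by case: (a \in S); case: (b \in S);
    rewrite ?andbT ?andbF.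
move=> u v uS vS; apply: connect_trans (hr v vS); rewrite sym; exact: hr.
Qed.

Import GRing.Theory Num.Theory.
Local Open Scope ring_scope.

Lemma build (R : realFieldType) n (e : rel 'I_n) r k : simple_graph e -> connected e ->
  forall j : nat,
  exists A : 'M[R]_(\sum_(i < j) MC R k #|layer e r i|, n),
  [/\ zero_one A, forall t, induces_connected e (row_support A t) &
   forall x1 x2 : 'cV[R]_n, sparse k x1 -> sparse k x2 -> A *m x1 = A *m x2 ->
     forall v, (dist e r v < j)%N -> x1 v ord0 = x2 v ord0].
Proof.
move=> sg ce; elim=> [|j [A [zA cA iA]]].
  rewrite big_ord0; exists 0; split=> //; last by case.
  by apply/forallP => [[]].
have [B [zB iB]] : has_design R k #|layer e r j| (MC R k #|layer e r j|).
  by rewrite /MC; case: ex_minnP => m /pboolP.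
set L := layer e r j.
pose C := \matrix_(t < MC R k #|L|, v < n)
  ((dist e r v < j)%:R + \sum_(u < #|L|) B t u * (enum_val u == v)%:R) : 'M[R]_(_, n).
have evL : forall u : 'I_#|L|, dist e r (enum_val u) = j.
  by move=> u; have := enum_valP u; rewrite inE => /eqP.
have hsum : forall t v, \sum_(u < #|L|) B t u * (enum_val u == v)%:R =
    if [pick u | enum_val u == v] is Some u then B t u else 0.
  move=> t v; case: pickP => [u0 /eqP hu0|none].
    rewrite (bigD1 u0) //= hu0 eqxx mulr1 big1 ?addr0 // => u neq.
    case: eqP => [hu|]; last by rewrite mulr0.
    by move: neq; rewrite -hu0 in hu; rewrite (enum_val_inj hu) eqxx.
  by rewrite big1 // => u _; rewrite none mulr0.
have hlt : forall t v, (dist e r v < j)%N -> C t v = 1.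
  move=> t v dv; rewrite mxE dv hsum; case: pickP => [u /eqP hu|_]; last by rewrite addr0.
  by move: dv; rewrite -hu evL ltnn.
have hge : forall t v, ~~ (dist e r v < j)%N -> C t v =
    if [pick u | enum_val u == v] is Some u then B t u else 0.
  by move=> t v dv; rewrite mxE (negbTE dv) add0r hsum.
pose y (x : 'cV[R]_n) : 'cV[R]_#|L| := \col_u x (enum_val u) ord0.
have hexp : forall (x : 'cV[R]_n) t, (C *m x) t ord0 =
    \sum_v (dist e r v < j)%:R * x v ord0 + (B *m y x) t ord0.
  move=> x t; rewrite !mxE.
  under eq_bigr do rewrite mxE mulrDl.
  rewrite big_split /=; congr (_ + _).
  under eq_bigr do rewrite mulr_suml.
  rewrite exchange_big /=; apply: eq_bigr => u _.
  rewrite mxE; under eq_bigr do rewrite -mulrA.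
  rewrite -mulr_sumr; congr (_ * _).
  rewrite (bigD1 (enum_val u)) //= eqxx mul1r big1 ?addr0 // => v /negbTE.
  by rewrite eq_sym => ->; rewrite mul0r.
rewrite big_ord_recr /=; exists (col_mx A C); split.
- apply/forallP => t; apply/forallP => v.
  case: (splitP t) => t' ht.
    have -> : t = lshift _ t' by apply: val_inj.
    by rewrite col_mxEu; move/forallP: zA => /(_ t') /forallP.
  have -> : t = rshift _ t' by apply: val_inj.
  rewrite col_mxEd; case: (boolP (dist e r v < j)%N) => dv.
    by rewrite hlt // eqxx orbT.
  rewrite hge //; case: pickP => [u _|_]; last by rewrite eqxx.
  by move/forallP: zB => /(_ t') /forallP.
- move=> t; case: (splitP t) => t' ht.
    have -> : t = lshift _ t' by apply: val_inj.
    by have -> : row_support (col_mx A C) (lshift _ t') = row_support A t'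
      by apply/setP => v; rewrite !inE col_mxEu.
  have -> : t = rshift _ t' by apply: val_inj.
  have -> : row_support (col_mx A C) (rshift _ t') = row_support C t'
    by apply/setP => v; rewrite !inE col_mxEd.
  apply: (@ball_conn _ _ r j) => //.
    move=> v; rewrite inE; case: (boolP (dist e r v < j)%N) => dv; first by move=> _; exact: ltnW.
    rewrite hge //; case: pickP => [u /eqP <- _|_]; last by rewrite eqxx.
    by rewrite evL.
  by move=> u du; rewrite inE hlt // oner_neq0.
move=> x1 x2 s1 s2; rewrite !mul_col_mx => /eq_col_mx [Ax Cx] v dv.
have agree := iA x1 x2 s1 s2 Ax.
case: (boolP (dist e r v < j)%N) => dvj; first exact: agree.
have dvE : dist e r v = j by apply/eqP; rewrite eqn_leq -ltnS dv leqNgt dvj.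
have vL : v \in L by rewrite inE dvE.
have yeq : y x1 = y x2.
  apply/eqP; apply: contraT => neq.
  have sy : forall x : 'cV[R]_n, sparse k x -> sparse k (y x).
    move=> x; rewrite /sparse => sx; apply: leq_trans sx.
    rewrite -(card_imset _ (@enum_val_inj _ (mem L))).
    apply: subset_leq_card; apply/subsetP => w /imsetP [u]; rewrite !inE mxE => nz ->.
    by [].
  have := iB _ _ (sy _ s1) (sy _ s2) neq; apply: contraNT => _.
  apply/eqP/matrixP => t i; rewrite (ord1 i).
  have := congr1 (fun M : 'M[R]_(_, 1) => M t ord0) Cx; rewrite /= !hexp.
  have -> : \sum_v0 (dist e r v0 < j)%:R * x1 v0 ord0 =
            \sum_v0 (dist e r v0 < j)%:R * x2 v0 ord0.
    apply: eq_bigr => w _; case: (boolP (dist e r w < j)%N) => dw.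
      by rewrite agree.
    by rewrite !mul0r.
  by move/addrI.
have := congr1 (fun M : 'M[R]_(_, 1) => M (enum_rank_in vL v) ord0) yeq.
by rewrite !mxE (enum_rankK_in vL vL).
Qed.

Theorem theorem6 (R : realFieldType) (n : nat) (e : rel 'I_n) (r : 'I_n) (k : nat) :
  is_tree e -> (1 <= k)%N ->
  (MG R e k <= \sum_(i < (depth e r).+1) MC R k #|layer e r i|)%N.
Proof.
move=> [sg [ce _]] _.
have [A [zA cA iA]] := build R r k sg ce (depth e r).+1.
have H : pbool (has_graph_design R e k (\sum_(i < (depth e r).+1) MC R k #|layer e r i|)).
  apply/pboolP; exists A; split; first by split=> // t _; exact: cA.
  move=> x1 x2 s1 s2; apply: contra_neq => Ax.
  apply/matrixP => v i; rewrite (ord1 i); apply: (iA _ _ s1 s2 Ax).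
  by rewrite ltnS; exact: (@leq_bigmax _ (fun w => dist e r w) v).
by rewrite /MG; case: ex_minnP => m _ /(_ _ H).
Qed.
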